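(* Let $H$ be a finite-dimensional Hopf algebra over a field $k$, $R\subseteq H$ a Hopf subalgebra, $Q=H/R^+H$, and for $n\ge0$ let $E_n=\mathrm{End}(Q^{\otimes n})_H$, acting on $Q^{\otimes(n+m)}$ (for $m\ge0$) by $\alpha\mapsto\alpha\otimes\mathrm{id}_Q^{\otimes m}$, making $Q^{\otimes(n+m)}$ an $E_n$-$H$-bimodule. Then for every $n\in\mathbb{N}$, $Q^{\otimes(n+1)}$ is isomorphic to a direct summand of $Q^{\otimes(n+2)}$ as $E_n$-$H$-bimodules. Consequently $Q^{\otimes(n+1)}$ is isomorphic to a direct summand of $Q^{\otimes(n+m)}$ as $E_n$-$H$-bimodules for any $m\ge n+1\ge 2$. If moreover $H$ is a semisimple extension of $R$, then $Q^{\otimes n}$ is isomorphic to a direct summand of $Q^{\otimes(n+m)}$ as $E_n$-$H$-bimodules for any $m\ge n\ge0$.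
   Context: $R^+=\ker\varepsilon\cap R$; $Q=H/R^+H$ is a right $H$-module coalgebra with coproduct $\overline{h}\mapsto\overline{h_{(1)}}\otimes\overline{h_{(2)}}$ and counit $\overline{h}\mapsto\varepsilon(h)$. $Q^{\otimes n}$ is the $n$-fold tensor power in mod-$H$ (tensor over $k$, diagonal $H$-action), $Q^{\otimes 0}=k$ with trivial action. $H$ is a (right) semisimple extension of $R$ if every short exact sequence of right $H$-modules which splits as a sequence of $R$-modules splits as $H$-modules; for Hopf subalgebra pairs this is equivalent to the existence of $t\in Q$ with $th=\varepsilon(h)t$ for all $h\in H$ and $\varepsilon_Q(t)=1$. *)

(* Defs.v *)
(* Finite-dimensional Hopf algebras, presented by structure
   constants with respect to a basis indexed by a finite type.  Vectors of a
   space with basis B are {ffun B -> k}; linear maps are given by their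
   "matrices" f : B1 -> B2 -> k, where f a b is the coefficient of e_b in the
   image f(e_a).  Composition [lcomp f g] means "first f, then g". *)
From HB Require Import structures.
From mathcomp Require Import all_boot all_algebra.
Set Implicit Arguments.
Unset Strict Implicit.
Unset Printing Implicit Defensive.
Import GRing.Theory.
Local Open Scope ring_scope.

Section LinAlg.
Variable k : fieldType.

Definition lmap (A B : finType) := A -> B -> k.
Definition lcomp (A B C : finType) (f : lmap A B) (g : lmap B C) : lmap A C :=
  fun a c => \sum_(b : B) f a b * g b c.
Definition lid (A : finType) : lmap A A := fun a b => (a == b)%:R.
Definition lmap_eq (A B : finType) (f g : lmap A B) := forall a b, f a b = g a b.
Definition lapply (A B : finType) (v : {ffun A -> k}) (f : lmap A B) : {ffun B -> k} :=
  [ffun b => \sum_(a : A) v a * f a b].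
Definition bvec (A : finType) (a : A) : {ffun A -> k} := [ffun b => (a == b)%:R].
Definition tensv (A B : finType) (u : {ffun A -> k}) (v : {ffun B -> k})
  : {ffun A * B -> k} := [ffun ab => u ab.1 * v ab.2].
End LinAlg.

(* Structure constants of a (candidate) Hopf algebra with basis (e_i)_{i : I}:
   e_i e_j = sum_l mu i j l e_l,  1 = sum_l eta l e_l,
   Delta e_i = sum_{j,l} delta i j l e_j (x) e_l,  eps e_i = eps i,
   S e_i = sum_j ant i j e_j. *)
Record hopf_struct (k : fieldType) (I : finType) := HopfStruct {
  hmu : I -> I -> I -> k;
  heta : I -> k;
  hdelta : I -> I -> I -> k;
  heps : I -> k;
  hant : I -> I -> k
}.

Section Hopf.
Variables (k : fieldType) (I : finType) (H : hopf_struct k I).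

Local Notation mu := (hmu H).
Local Notation eta := (heta H).
Local Notation delta := (hdelta H).
Local Notation eps := (heps H).
Local Notation ant := (hant H).

Record is_hopf : Prop := IsHopf {
  hopf_assoc : forall i j l o,
    \sum_p mu i j p * mu p l o = \sum_p mu j l p * mu i p o;
  hopf_unitl : forall i o, \sum_p eta p * mu p i o = (i == o)%:R;
  hopf_unitr : forall i o, \sum_p eta p * mu i p o = (i == o)%:R;
  hopf_coassoc : forall i a b c,
    \sum_p delta i p c * delta p a b = \sum_p delta i a p * delta p b c;
  hopf_counitl : forall i b, \sum_p eps p * delta i p b = (i == b)%:R;
  hopf_counitr : forall i b, \sum_p eps p * delta i b p = (i == b)%:R;
  hopf_comul_mul : forall i j a b,
    \sum_p mu i j p * delta p a b =
    \sum_a1 \sum_b1 \sum_a2 \sum_b2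
       delta i a1 b1 * delta j a2 b2 * mu a1 a2 a * mu b1 b2 b;
  hopf_comul_unit : forall a b, \sum_p eta p * delta p a b = eta a * eta b;
  hopf_counit_mul : forall i j, \sum_p mu i j p * eps p = eps i * eps j;
  hopf_counit_unit : \sum_p eta p * eps p = 1;
  hopf_antipodel : forall i o,
    \sum_a \sum_b delta i a b * (\sum_c ant a c * mu c b o) = eps i * eta o;
  hopf_antipoder : forall i o,
    \sum_a \sum_b delta i a b * (\sum_c ant b c * mu a c o) = eps i * eta o
}.

Definition hmulv (x y : {ffun I -> k}) : {ffun I -> k} :=
  [ffun l => \sum_i \sum_j x i * y j * mu i j l].
Definition honev : {ffun I -> k} := [ffun l => eta l].
Definition hcomulv (x : {ffun I -> k}) : {ffun I * I -> k} :=
  [ffun jl => \sum_i x i * delta i jl.1 jl.2].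
Definition hcounitv (x : {ffun I -> k}) : k := \sum_i x i * eps i.
Definition hantv (x : {ffun I -> k}) : {ffun I -> k} :=
  [ffun j => \sum_i x i * ant i j].

Definition hopf_subalg (R : {ffun I -> k} -> Prop) : Prop :=
  [/\ R 0 /\
      (forall (a : k) x y, R x -> R y -> R [ffun i => a * x i + y i]),
      R honev,
      (forall x y, R x -> R y -> R (hmulv x y)),
      (forall x, R x -> exists s : seq ({ffun I -> k} * {ffun I -> k}),
          (forall p, p \in s -> R p.1 /\ R p.2) /\
          hcomulv x = \sum_(p <- s) tensv p.1 p.2) &
      (forall x, R x -> R (hantv x))].

Definition Rplus (R : {ffun I -> k} -> Prop) (x : {ffun I -> k}) : Prop :=
  R x /\ hcounitv x = 0.
Definition in_RplusH (R : {ffun I -> k} -> Prop) (x : {ffun I -> k}) : Prop :=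
  exists s : seq ({ffun I -> k} * {ffun I -> k}),
    (forall p, p \in s -> Rplus R p.1) /\ x = \sum_(p <- s) hmulv p.1 p.2.

(* (J, pi, rhoQ) is a model of Q = H / R^+H with its right H-module structure:
   pi : H -> Q is linear and surjective with kernel R^+H, and rhoQ i is the
   action of e_i on Q, i.e. pi (x e_i) = pi(x) . e_i. *)
Definition is_quotient_RplusH (R : {ffun I -> k} -> Prop) (J : finType)
  (pi : lmap k I J) (rhoQ : I -> lmap k J J) : Prop :=
  [/\ (forall w : {ffun J -> k}, exists h, lapply h pi = w),
      (forall h, lapply h pi = 0 <-> in_RplusH R h) &
      (forall h i, lapply (hmulv h (bvec k i)) pi = lapply (lapply h pi) (rhoQ i))].

Definition is_rmodule (A : finType) (rho : I -> lmap k A A) : Prop :=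
  (forall i j, lmap_eq (lcomp (rho i) (rho j)) (fun a b => \sum_l mu i j l * rho l a b))
  /\ lmap_eq (fun a b => \sum_l eta l * rho l a b) (@lid k A).

Definition ract (A : finType) (rho : I -> lmap k A A) (x : {ffun I -> k}) : lmap k A A :=
  fun a b => \sum_i x i * rho i a b.

Definition H_linear (A B : finType) (rhoA : I -> lmap k A A) (rhoB : I -> lmap k B B)
  (f : lmap k A B) : Prop :=
  forall i, lmap_eq (lcomp (rhoA i) f) (lcomp f (rhoB i)).

Definition R_linear (R : {ffun I -> k} -> Prop) (A B : finType)
  (rhoA : I -> lmap k A A) (rhoB : I -> lmap k B B) (f : lmap k A B) : Prop :=
  forall x, R x -> lmap_eq (lcomp (ract rhoA x) f) (lcomp f (ract rhoB x)).

(* H is a (right) semisimple extension of R: every short exact sequence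
   0 -> A -> B -> C -> 0 of (finite-dimensional) right H-modules which splits
   as a sequence of R-modules splits as a sequence of H-modules. *)
Definition semisimple_ext (R : {ffun I -> k} -> Prop) : Prop :=
  forall (A B C : finType) (rhoA : I -> lmap k A A) (rhoB : I -> lmap k B B)
         (rhoC : I -> lmap k C C) (f : lmap k A B) (g : lmap k B C),
    is_rmodule rhoA -> is_rmodule rhoB -> is_rmodule rhoC ->
    H_linear rhoA rhoB f -> H_linear rhoB rhoC g ->
    (forall v, lapply v f = 0 -> v = 0) ->
    (forall w, exists v, lapply v g = w) ->
    (forall v, lapply v g = 0 <-> exists u, lapply u f = v) ->
    (exists s, R_linear R rhoC rhoB s /\ lmap_eq (lcomp s g) (@lid k C)) ->
    (exists s, H_linear rhoC rhoB s /\ lmap_eq (lcomp s g) (@lid k C)).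

Unset Implicit Arguments.

Section TensorPowers.
Variables (J : finType) (rhoQ : I -> lmap k J J).

(* basis of Q^{(x) n}: e_f = e_{f 0} (x) ... (x) e_{f (n-1)} *)
Definition tbasis (n : nat) : finType := {ffun 'I_n -> J}.

(* coefficients of the iterated coproduct Delta^{(n)} : H -> H^{(x) n},
   Delta^{(0)} = eps, Delta^{(n+1)} = (Delta^{(n)} (x) id) o Delta *)
Fixpoint itcomul (n : nat) : I -> {ffun 'I_n -> I} -> k :=
  match n return I -> {ffun 'I_n -> I} -> k with
  | 0 => fun i _ => eps i
  | n'.+1 => fun i c =>
      \sum_p delta i p (c ord_max) *
             itcomul n' p [ffun t : 'I_n' => c (widen_ord (leqnSn n') t)]
  end.

Definition tact (n : nat) (i : I) : lmap k (tbasis n) (tbasis n) :=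
  fun f g => \sum_(c : {ffun 'I_n -> I}) itcomul n i c *
               \prod_(t < n) rhoQ (c t) (f t) (g t).

Definition in_End (n : nat) (alpha : lmap k (tbasis n) (tbasis n)) : Prop :=
  H_linear (tact n) (tact n) alpha.

Definition tfst n m (f : tbasis (n + m)) : tbasis n := [ffun t => f (lshift m t)].
Definition tsnd n m (f : tbasis (n + m)) : tbasis m := [ffun t => f (rshift n t)].
Definition ext n m (alpha : lmap k (tbasis n) (tbasis n))
  : lmap k (tbasis (n + m)) (tbasis (n + m)) :=
  fun f g => alpha (tfst n m f) (tfst n m g) * (tsnd n m f == tsnd n m g)%:R.

Definition bimod_hom n a b (phi : lmap k (tbasis (n + a)) (tbasis (n + b))) : Prop :=
  H_linear (tact (n + a)) (tact (n + b)) phi /\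
  forall alpha, in_End n alpha ->
    lmap_eq (lcomp (ext n a alpha) phi) (lcomp phi (ext n b alpha)).

Definition bimod_summand n a b : Prop :=
  exists (iota : lmap k (tbasis (n + a)) (tbasis (n + b)))
         (p : lmap k (tbasis (n + b)) (tbasis (n + a))),
    [/\ bimod_hom n a b iota, bimod_hom n b a p & lmap_eq (lcomp iota p) (@lid k _)].
End TensorPowers.
End Hopf.

Arguments itcomul {k I} H n i c.
Arguments tact {k I} H {J} rhoQ n i f g.
Arguments in_End {k I} H {J} rhoQ n alpha.
Arguments ext {k J} n m alpha f g.
Arguments bimod_hom {k I} H {J} rhoQ n a b phi.
Arguments bimod_summand {k I} H {J} rhoQ n a b.

(* Main.v *)
Require Import Defs.
From mathcomp Require Import all_boot all_algebra.
From mathcomp Require Import ring.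
From Stdlib Require Import FunctionalExtensionality.
Set Implicit Arguments. Unset Strict Implicit. Unset Printing Implicit Defensive.
Import GRing.Theory.

Section Itcomul.
Local Open Scope ring_scope.
Variables (k : fieldType) (I : finType) (H : hopf_struct k I).
Hypothesis HH : is_hopf H.
Local Notation delta := (hdelta H).
Local Notation eps := (heps H).

Lemma itcomulS n i c : itcomul H n.+1 i c =
  \sum_p delta i p (c ord_max) * itcomul H n p [ffun t => c (widen_ord (leqnSn n) t)].
Proof. by []. Qed.

Lemma counitl' i b : \sum_p delta i p b * eps p = (i == b)%:R.
Proof. rewrite -(hopf_counitl HH i b); apply: eq_bigr => p _; exact: mulrC. Qed.
Lemma counitr' i b : \sum_p delta i b p * eps p = (i == b)%:R.
Proof. rewrite -(hopf_counitr HH i b); apply: eq_bigr => p _; exact: mulrC. Qed.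

Lemma itcomul_left n i c : itcomul H n.+1 i c =
  \sum_p delta i (c ord0) p * itcomul H n p [ffun t => c (lift ord0 t)].
Proof.
elim: n i c => [|n IH] i c.
  rewrite itcomulS /=.
  have -> : (ord_max : 'I_1) = ord0 by apply/val_inj.
  by rewrite counitl' counitr'.
rewrite itcomulS.
transitivity (\sum_p \sum_q delta i p (c ord_max) * delta p (c ord0) q *
   itcomul H n q [ffun t => c (lift ord0 (widen_ord (leqnSn n) t))]).
  apply: eq_bigr => p _; rewrite IH big_distrr; apply: eq_bigr => q _.
  rewrite ffunE /= mulrA; congr (_ * delta _ (c _) _ * itcomul H n q _).
    by apply/val_inj.
  by apply/ffunP => t; rewrite !ffunE; congr (c _); apply/val_inj.
rewrite exchange_big /=.
transitivity (\sum_q \sum_p delta i (c ord0) p * delta p q (c ord_max) *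
   itcomul H n q [ffun t => c (lift ord0 (widen_ord (leqnSn n) t))]).
  apply: eq_bigr => q _; rewrite -!big_distrl /=; congr (_ * _).
  exact: (hopf_coassoc HH).
rewrite exchange_big /=; apply: eq_bigr => p _; rewrite big_distrr /=.
apply: eq_bigr => q _; rewrite ?ffunE /= mulrA; congr (_ * delta _ _ (c _) * itcomul H n q _).
  by apply/val_inj.
by apply/ffunP => t; rewrite !ffunE; congr (c _); apply/val_inj.
Qed.


Definition ffst (T : Type) n m (c : {ffun 'I_(n+m) -> T}) : {ffun 'I_n -> T} :=
  [ffun t => c (lshift m t)].
Definition fsnd (T : Type) n m (c : {ffun 'I_(n+m) -> T}) : {ffun 'I_m -> T} :=
  [ffun t => c (rshift n t)].

Lemma sum_delta (T : finType) (a : T) (F : T -> k) :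
  \sum_b (a == b)%:R * F b = F a.
Proof.
rewrite (bigD1 a) //= eqxx mul1r big1 ?addr0 // => b /negbTE.
by rewrite eq_sym => ->; rewrite mul0r.
Qed.
Lemma sum_delta' (T : finType) (a : T) (F : T -> k) :
  \sum_b F b * (b == a)%:R = F a.
Proof.
rewrite -[RHS](sum_delta a); apply: eq_bigr => b _; by rewrite mulrC eq_sym.
Qed.

Lemma itcomul_split n m i c : itcomul H (n + m) i c =
  \sum_a \sum_b delta i a b * itcomul H n a (ffst c) * itcomul H m b (fsnd c).
Proof.
elim: n i c => [|n IH] i c.
  rewrite exchange_big /=.
  transitivity (\sum_b (i == b)%:R * itcomul H m b (fsnd c)); last first.
    apply: eq_bigr => b _; rewrite -big_distrl /= -(hopf_counitl HH i b).
    congr (_ * _); apply: eq_bigr => a _; exact: mulrC.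
  rewrite sum_delta; congr (itcomul H m i _).
  by apply/ffunP => t; rewrite ffunE; congr (c _); apply/val_inj.
change (itcomul H (n + m).+1 i c = \sum_a \sum_b delta i a b * itcomul H n.+1 a (ffst c) *
   itcomul H m b (fsnd c)).
rewrite itcomul_left.
transitivity (\sum_p \sum_a \sum_b delta i (c ord0) p * delta p a b *
   itcomul H n a [ffun t => c (lift ord0 (lshift m t))] *
   itcomul H m b [ffun t => c (rshift n.+1 t)]).
  apply: eq_bigr => p _; rewrite IH big_distrr; apply: eq_bigr => a _.
  rewrite big_distrr; apply: eq_bigr => b _ /=; rewrite !mulrA.
  congr (_ * itcomul H n a _ * itcomul H m b _).
    by apply/ffunP => t; rewrite !ffunE.
  by apply/ffunP => t; rewrite !ffunE; congr (c _); apply/val_inj.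
transitivity (\sum_a \sum_b \sum_x delta i (c ord0) x * delta x a b *
   itcomul H n a [ffun t => c (lift ord0 (lshift m t))] *
   itcomul H m b [ffun t => c (rshift n.+1 t)]).
  rewrite exchange_big; apply: eq_bigr => a _; by rewrite exchange_big.
transitivity (\sum_a \sum_b \sum_x delta i x b * delta x (c ord0) a *
   itcomul H n a [ffun t => c (lift ord0 (lshift m t))] *
   itcomul H m b [ffun t => c (rshift n.+1 t)]).
  apply: eq_bigr => a _; apply: eq_bigr => b _.
  rewrite -!big_distrl /=; congr (_ * _ * _).
  by rewrite (hopf_coassoc HH).
transitivity (\sum_x \sum_b \sum_a delta i x b * delta x (c ord0) a *
   itcomul H n a [ffun t => c (lift ord0 (lshift m t))] *
   itcomul H m b [ffun t => c (rshift n.+1 t)]).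
  rewrite (eq_bigr (fun a => \sum_x \sum_b delta i x b * delta x (c ord0) a *
   itcomul H n a [ffun t => c (lift ord0 (lshift m t))] *
   itcomul H m b [ffun t => c (rshift n.+1 t)])); last by move=> a _; rewrite exchange_big.
  rewrite exchange_big; apply: eq_bigr => x _; by rewrite exchange_big.
apply: eq_bigr => x _; apply: eq_bigr => b _.
rewrite itcomul_left !big_distrr big_distrl /=; apply: eq_bigr => a _.
rewrite !ffunE !mulrA; congr (_ * delta _ (c _) _ * itcomul H n a _ * _).
  by apply/val_inj.
by apply/ffunP => t; rewrite !ffunE; congr (c _); apply/val_inj.
Qed.


Definition fjoin (T : Type) n m (a : {ffun 'I_n -> T}) (b : {ffun 'I_m -> T})
  : {ffun 'I_(n+m) -> T} :=
  [ffun t => match split t with inl x => a x | inr y => b y end].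

Lemma fjoinl (T : Type) n m (a : {ffun 'I_n -> T}) (b : {ffun 'I_m -> T}) t :
  fjoin a b (lshift m t) = a t.
Proof. by rewrite ffunE (unsplitK (inl _ t)). Qed.
Lemma fjoinr (T : Type) n m (a : {ffun 'I_n -> T}) (b : {ffun 'I_m -> T}) t :
  fjoin a b (rshift n t) = b t.
Proof. by rewrite ffunE (unsplitK (inr _ t)). Qed.
Lemma ffst_join (T : Type) n m (a : {ffun 'I_n -> T}) (b : {ffun 'I_m -> T}) :
  ffst (fjoin a b) = a.
Proof. by apply/ffunP => t; rewrite ffunE fjoinl. Qed.
Lemma fsnd_join (T : Type) n m (a : {ffun 'I_n -> T}) (b : {ffun 'I_m -> T}) :
  fsnd (fjoin a b) = b.
Proof. by apply/ffunP => t; rewrite ffunE fjoinr. Qed.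
Lemma fjoin_split (T : Type) n m (c : {ffun 'I_(n+m) -> T}) :
  fjoin (ffst c) (fsnd c) = c.
Proof.
apply/ffunP => t; rewrite ffunE; case: splitP => j e; rewrite ffunE;
  congr (c _); exact/val_inj.
Qed.

Lemma sum_split (T : finType) n m (F : {ffun 'I_(n+m) -> T} -> k) :
  \sum_c F c = \sum_a \sum_b F (fjoin a b).
Proof.
rewrite pair_big /=.
have bij : bijective (fun p : {ffun 'I_n -> T} * {ffun 'I_m -> T} => fjoin p.1 p.2).
  exists (fun c => (ffst c, fsnd c)).
    by case=> a b /=; rewrite ffst_join fsnd_join.
  by move=> c /=; rewrite fjoin_split.
by rewrite (reindex _ (onW_bij _ bij)).
Qed.


Lemma lmap_eqE (A B : finType) (f g : lmap k A B) : lmap_eq f g -> f = g.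
Proof. move=> e; apply: functional_extensionality => a; apply: functional_extensionality => b; exact: e. Qed.

Lemma lcompA (A B C D : finType) (f : lmap k A B) (g : lmap k B C) (h : lmap k C D) :
  lmap_eq (lcomp (lcomp f g) h) (lcomp f (lcomp g h)).
Proof.
move=> a d; rewrite /lcomp.
under eq_bigr => c _ do rewrite big_distrl /=.
rewrite exchange_big; apply: eq_bigr => b _; rewrite big_distrr /=.
by apply: eq_bigr => c _; rewrite mulrA.
Qed.

Lemma lcomp1l (A B : finType) (f : lmap k A B) : lcomp (@lid k A) f = f.
Proof. apply: lmap_eqE => a b; exact: sum_delta. Qed.
Lemma lcomp1r (A B : finType) (f : lmap k A B) : lcomp f (@lid k B) = f.
Proof. apply: lmap_eqE => a b; rewrite /lcomp /lid; exact: sum_delta'. Qed.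

Lemma Hlin_comp (A B C : finType) (rA : I -> lmap k A A) (rB : I -> lmap k B B)
  (rC : I -> lmap k C C) (f : lmap k A B) (g : lmap k B C) :
  H_linear rA rB f -> H_linear rB rC g -> H_linear rA rC (lcomp f g).
Proof.
move=> Hf Hg i.
rewrite -(lmap_eqE (lcompA _ _ _)) (lmap_eqE (Hf i)) (lmap_eqE (lcompA _ _ _)).
by rewrite (lmap_eqE (Hg i)) -(lmap_eqE (lcompA _ _ _)).
Qed.

Section TP.
Variables (J : finType) (rhoQ : I -> lmap k J J).
Local Notation tact := (tact H rhoQ).

Lemma tact_split n m i (f g : tbasis J (n + m)) :
  tact (n + m) i f g = \sum_a \sum_b delta i a b *
     tact n a (tfst J n m f) (tfst J n m g) * tact m b (tsnd J n m f) (tsnd J n m g).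
Proof.
rewrite /Defs.tact.
pose G (c1 : {ffun 'I_n -> I}) (c2 : {ffun 'I_m -> I}) := \sum_a \sum_b delta i a b *
    (itcomul H n a c1 * \prod_(t < n) rhoQ (c1 t) (f (lshift m t)) (g (lshift m t))) *
    (itcomul H m b c2 * \prod_(t < m) rhoQ (c2 t) (f (rshift n t)) (g (rshift n t))).
transitivity (\sum_c G (ffst c) (fsnd c)).
  apply: eq_bigr => c _; rewrite itcomul_split // big_split_ord /= big_distrl.
  apply: eq_bigr => a _; rewrite big_distrl; apply: eq_bigr => b _ /=.
  have -> : \prod_(t < n) rhoQ (c (lshift m t)) (f (lshift m t)) (g (lshift m t)) =
            \prod_(t < n) rhoQ (ffst c t) (f (lshift m t)) (g (lshift m t)).
    by apply: eq_bigr => t _; rewrite ffunE.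
  have -> : \prod_(t < m) rhoQ (c (rshift n t)) (f (rshift n t)) (g (rshift n t)) =
            \prod_(t < m) rhoQ (fsnd c t) (f (rshift n t)) (g (rshift n t)).
    by apply: eq_bigr => t _; rewrite ffunE.
  ring.
rewrite sum_split.
under eq_bigr => c1 _ do under eq_bigr => c2 _ do rewrite ffst_join fsnd_join.
rewrite /G pair_big /=.
under eq_bigr => p _ do rewrite pair_big /=.
rewrite exchange_big /= pair_big /=.
symmetry.
under eq_bigr => a _ do under eq_bigr => b _ do (rewrite -mulrA big_distrlr big_distrr /=; under eq_bigr => c1 _ do rewrite big_distrr /=; rewrite pair_big /=).
rewrite pair_big /= pair_big /=.
apply: eq_bigr => p _; rewrite !mulrA; congr (_ * _ * _ * _).
  by apply: eq_bigr => t _; rewrite !ffunE.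
by apply: eq_bigr => t _; rewrite !ffunE.
Qed.

Lemma sum_deltaL (T : finType) (a : T) (F : T -> k) :
  \sum_b (b == a)%:R * F b = F a.
Proof. rewrite -[RHS](sum_delta a); apply: eq_bigr => b _; by rewrite eq_sym. Qed.

Lemma sum_delta2 (T1 T2 : finType) (a1 : T1) (a2 : T2) (F : T1 -> T2 -> k) :
  \sum_x \sum_y (x == a1)%:R * (y == a2)%:R * F x y = F a1 a2.
Proof.
rewrite -[RHS](sum_deltaL a1 (fun x => F x a2)); apply: eq_bigr => x _.
rewrite -(sum_deltaL a2 (F x)) big_distrr; apply: eq_bigr => y _ /=; ring.
Qed.

Lemma tfst_join n m (x : tbasis J n) (y : tbasis J m) : tfst J n m (fjoin x y) = x.
Proof. exact: ffst_join. Qed.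
Lemma tsnd_join n m (x : tbasis J n) (y : tbasis J m) : tsnd J n m (fjoin x y) = y.
Proof. exact: fsnd_join. Qed.
Lemma tsum_split n m (F : tbasis J (n + m) -> k) :
  \sum_c F c = \sum_a \sum_b F (fjoin a b).
Proof. exact: (@sum_split J n m F). Qed.

Definition Lf n a b (phi : lmap k (tbasis J a) (tbasis J b))
  : lmap k (tbasis J (n + a)) (tbasis J (n + b)) :=
  fun f g => (tfst J n a f == tfst J n b g)%:R * phi (tsnd J n a f) (tsnd J n b g).
Arguments Lf n {a b} phi _ _.

Lemma pull3 (X Y Z : finType) (A : X -> Y -> k) (B : Y -> Z -> k) :
  \sum_z \sum_x \sum_y A x y * B y z = \sum_x \sum_y A x y * \sum_z B y z.
Proof.
rewrite exchange_big; apply: eq_bigr => x _; rewrite exchange_big; apply: eq_bigr => y _.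
by rewrite big_distrr.
Qed.

Lemma Lf_Hlin n a b phi :
  H_linear (tact a) (tact b) phi -> H_linear (tact (n + a)) (tact (n + b)) (Lf n phi).
Proof.
move=> Hphi i f g; rewrite /lcomp /Lf.
transitivity (\sum_x \sum_y delta i x y * tact n x (tfst J n a f) (tfst J n b g) *
   \sum_h2 tact a y (tsnd J n a f) h2 * phi h2 (tsnd J n b g)).
  rewrite -pull3 tsum_split exchange_big; apply: eq_bigr => h2 _.
  transitivity (\sum_h1 (h1 == (tfst J n b g))%:R *
     (\sum_x \sum_y delta i x y * tact n x (tfst J n a f) h1 * (tact a y (tsnd J n a f) h2 * phi h2 (tsnd J n b g)))).
    apply: eq_bigr => h1 _.
    rewrite tact_split tfst_join tsnd_join big_distrl /= mulrC.
    rewrite big_distrr /=; apply: eq_bigr => x _; rewrite big_distrl big_distrr /=; apply: eq_bigr => y _; ring.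
  exact: (sum_deltaL (tfst J n b g) (fun h1 =>
     \sum_x \sum_y delta i x y * tact n x (tfst J n a f) h1 * (tact a y (tsnd J n a f) h2 * phi h2 (tsnd J n b g)))).
symmetry.
transitivity (\sum_x \sum_y delta i x y * tact n x (tfst J n a f) (tfst J n b g) *
   \sum_h2 phi (tsnd J n a f) h2 * tact b y h2 (tsnd J n b g)).
  rewrite -pull3 tsum_split exchange_big; apply: eq_bigr => h2 _.
  transitivity (\sum_h1 (h1 == (tfst J n a f))%:R *
     (\sum_x \sum_y delta i x y * tact n x h1 (tfst J n b g) * (phi (tsnd J n a f) h2 * tact b y h2 (tsnd J n b g)))).
    apply: eq_bigr => h1 _.
    rewrite tact_split tfst_join tsnd_join eq_sym -mulrA; congr (_ * _).
    rewrite big_distrr /=; apply: eq_bigr => x _.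
    rewrite big_distrr /=; apply: eq_bigr => y _; ring.
  exact: (sum_deltaL (tfst J n a f) (fun h1 =>
     \sum_x \sum_y delta i x y * tact n x h1 (tfst J n b g) * (phi (tsnd J n a f) h2 * tact b y h2 (tsnd J n b g)))).
apply: eq_bigr => x _; apply: eq_bigr => y _; congr (_ * _).
symmetry; exact: (Hphi y (tsnd J n a f) (tsnd J n b g)).
Qed.

Lemma Lf_ext n a b phi alpha :
  lmap_eq (lcomp (ext n a alpha) (Lf n phi)) (lcomp (Lf n phi) (ext n b alpha)).
Proof.
move=> f g; rewrite /lcomp /ext /Lf.
transitivity (alpha (tfst J n a f) (tfst J n b g) * phi (tsnd J n a f) (tsnd J n b g)).
  rewrite tsum_split -(sum_delta2 (tfst J n b g) (tsnd J n a f)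
     (fun h1 h2 => alpha (tfst J n a f) h1 * phi h2 (tsnd J n b g))).
  apply: eq_bigr => h1 _; apply: eq_bigr => h2 _; rewrite tfst_join tsnd_join.
  rewrite (eq_sym (tsnd J n a f)); ring.
rewrite tsum_split -(sum_delta2 (tfst J n a f) (tsnd J n b g)
     (fun h1 h2 => alpha h1 (tfst J n b g) * phi (tsnd J n a f) h2)).
apply: eq_bigr => h1 _; apply: eq_bigr => h2 _; rewrite tfst_join tsnd_join.
rewrite (eq_sym (tfst J n a f)); ring.
Qed.

Lemma Lf_comp n a b (phi : lmap k (tbasis J a) (tbasis J b)) (psi : lmap k (tbasis J b) (tbasis J a)) :
  lmap_eq (lcomp (Lf n phi) (Lf n psi)) (Lf n (a := a) (b := a) (lcomp phi psi)).
Proof.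
move=> f g; rewrite /lcomp /Lf tsum_split.
rewrite exchange_big big_distrr /=; apply: eq_bigr => h2 _.
rewrite -(sum_deltaL (tfst J n a f) (fun h1 =>
   (h1 == tfst J n a g)%:R * (phi (tsnd J n a f) h2 * psi h2 (tsnd J n a g)))).
apply: eq_bigr => h1 _; rewrite tfst_join tsnd_join (eq_sym (tfst J n a f)); ring.
Qed.

Lemma tbasis_eq n m (f g : tbasis J (n + m)) :
  (f == g) = (tfst J n m f == tfst J n m g) && (tsnd J n m f == tsnd J n m g).
Proof.
apply/eqP/andP => [-> //|[/eqP e1 /eqP e2]].
by rewrite -(fjoin_split f) -(fjoin_split g); congr fjoin.
Qed.

Definition hsummand a b := exists (phi : lmap k (tbasis J a) (tbasis J b))
  (psi : lmap k (tbasis J b) (tbasis J a)),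
  [/\ H_linear (tact a) (tact b) phi, H_linear (tact b) (tact a) psi &
      lmap_eq (lcomp phi psi) (@lid k _)].

Lemma lift_summand n a b : hsummand a b -> bimod_summand H rhoQ n a b.
Proof.
case=> phi [psi [Hphi Hpsi Hid]].
exists (Lf n phi), (Lf n psi); split.
- split; first exact: Lf_Hlin.
  by move=> alpha _; exact: Lf_ext.
- split; first exact: Lf_Hlin.
  by move=> alpha _; exact: Lf_ext.
move=> f g; rewrite Lf_comp /Lf Hid /lid tbasis_eq.
by case: (_ == _); case: (_ == _); rewrite ?mulr1 ?mulr0 ?mul0r.
Qed.

Lemma hsummand_trans a b c : hsummand a b -> hsummand b c -> hsummand a c.
Proof.
case=> phi [psi [H1 H2 H3]] [phi' [psi' [H1' H2' H3']]].
exists (lcomp phi phi'), (lcomp psi' psi); split.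
- exact: Hlin_comp.
- exact: Hlin_comp.
move: H3 H3' => /lmap_eqE H3 /lmap_eqE H3'.
have -> : lcomp (lcomp phi phi') (lcomp psi' psi) = lcomp phi (lcomp (lcomp phi' psi') psi).
  by rewrite (lmap_eqE (lcompA _ _ _)) (lmap_eqE (lcompA phi' psi' psi)).
by rewrite H3' lcomp1l H3.
Qed.

Lemma hsummand_refl a : hsummand a a.
Proof.
exists (@lid k _), (@lid k _); split; try by move=> i x y; rewrite lcomp1l lcomp1r.
by rewrite lcomp1l.
Qed.

Lemma bimod_hsummand n a b : bimod_summand H rhoQ n a b -> hsummand (n + a) (n + b).
Proof. by case=> phi [psi [[H1 _] [H2 _] H3]]; exists phi, psi. Qed.

Lemma ffun0_eq (T : Type) (f g : {ffun 'I_0 -> T}) : f = g.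
Proof. by apply/ffunP => -[]. Qed.

Lemma sum_ffun0 (T : finType) (F : {ffun 'I_0 -> T} -> k) (f0 : {ffun 'I_0 -> T}) :
  \sum_f F f = F f0.
Proof.
rewrite (bigD1 f0) //= big1 ?addr0 // => f /negP []; apply/eqP; exact: ffun0_eq.
Qed.

Lemma sum_ffun1 (T : finType) (F : {ffun 'I_1 -> T} -> k) :
  \sum_f F f = \sum_j F [ffun _ => j].
Proof.
have bij : bijective (fun j : T => [ffun _ : 'I_1 => j]).
  exists (fun f : {ffun 'I_1 -> T} => f ord0); first by move=> j; rewrite ffunE.
  move=> f; apply/ffunP => t; rewrite !ffunE; congr (f _); apply/val_inj; by case: t => -[].
by rewrite (reindex _ (onW_bij _ bij)).
Qed.

Lemma tact0 i (f g : tbasis J 0) : tact 0 i f g = eps i.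
Proof.
rewrite /Defs.tact (sum_ffun0 _ [ffun _ => i]).
by rewrite big_ord0 mulr1.
Qed.

Lemma tact1 i (f g : tbasis J 1) : tact 1 i f g = rhoQ i (f ord0) (g ord0).
Proof.
rewrite /Defs.tact sum_ffun1.
rewrite -(sum_deltaL i (fun j => rhoQ j (f ord0) (g ord0))).
apply: eq_bigr => j _; rewrite itcomulS /= big_ord1 !ffunE counitl' eq_sym.
by congr (_ * rhoQ _ (f _) (g _)); apply/val_inj.
Qed.

Lemma tact2 i (f g : tbasis J 2) : tact 2 i f g =
  \sum_p \sum_q delta i p q * rhoQ p (tfst J 1 1 f ord0) (tfst J 1 1 g ord0) *
                 rhoQ q (tsnd J 1 1 f ord0) (tsnd J 1 1 g ord0).
Proof.
rewrite (@tact_split 1%N 1%N i f g); apply: eq_bigr => p _; apply: eq_bigr => q _.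
by rewrite !tact1.
Qed.

Lemma eq_tb1 (x : J) (f : tbasis J 1) : ([ffun _ => x] == f) = (x == f ord0).
Proof.
apply/eqP/eqP => [<-|->]; first by rewrite ffunE.
apply/ffunP => t; by rewrite ffunE (ord1 t).
Qed.
Lemma eq_tb1' (f g : tbasis J 1) : (f ord0 == g ord0) = (f == g).
Proof.
apply/eqP/eqP => [e|-> //]; apply/ffunP => t; by rewrite (ord1 t).
Qed.

Lemma sum_tb1 (F : tbasis J 1 -> k) : \sum_f F f = \sum_j F [ffun _ => j].
Proof. exact: (@sum_ffun1 J F). Qed.
Lemma sum_tb2 (F : tbasis J 2 -> k) :
  \sum_f F f = \sum_x \sum_y F (fjoin [ffun _ : 'I_1 => x] [ffun _ : 'I_1 => y]).
Proof.
rewrite (@tsum_split 1%N 1%N) sum_tb1; apply: eq_bigr => x _; exact: sum_tb1.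
Qed.

Lemma hsummand12 (DQ : J -> J -> J -> k) (epsQ : J -> k) :
  (forall i a b c, \sum_x rhoQ i a x * DQ x b c =
     \sum_x \sum_y DQ a x y * \sum_p \sum_q delta i p q * rhoQ p x b * rhoQ q y c) ->
  (forall i a, \sum_b rhoQ i a b * epsQ b = eps i * epsQ a) ->
  (forall a b, \sum_c DQ a b c * epsQ c = (a == b)%:R) ->
  hsummand 1 2.
Proof.
move=> HD Heps Hcou.
exists (fun (f : tbasis J 1) (g : tbasis J 2) =>
   DQ (f ord0) (tfst J 1 1 g ord0) (tsnd J 1 1 g ord0)).
exists (fun (g : tbasis J 2) (f : tbasis J 1) =>
   (tfst J 1 1 g == f)%:R * epsQ (tsnd J 1 1 g ord0)); split.
- move=> i f g; rewrite /lcomp sum_tb1.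
  under eq_bigr => x _ do rewrite tact1 ffunE.
  rewrite HD sum_tb2; apply: eq_bigr => x _; apply: eq_bigr => y _.
  rewrite tact2 tfst_join tsnd_join !ffunE; congr (_ * _).
- move=> i g f; rewrite /lcomp sum_tb2 sum_tb1.
  transitivity (\sum_x (x == f ord0)%:R * \sum_y (\sum_p \sum_q delta i p q *
       rhoQ p (tfst J 1 1 g ord0) x * rhoQ q (tsnd J 1 1 g ord0) y) * epsQ y).
    apply: eq_bigr => x _; rewrite big_distrr; apply: eq_bigr => y _ /=.
    rewrite tact2 tfst_join tsnd_join !ffunE eq_tb1; ring.
  rewrite (sum_deltaL (f ord0) (fun x => \sum_y (\sum_p \sum_q delta i p q *
       rhoQ p (tfst J 1 1 g ord0) x * rhoQ q (tsnd J 1 1 g ord0) y) * epsQ y)).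
  transitivity (\sum_p (\sum_q delta i p q * eps q) * rhoQ p (tfst J 1 1 g ord0) (f ord0)
      * epsQ (tsnd J 1 1 g ord0)).
    under eq_bigr => y _ do rewrite big_distrl /=.
    rewrite exchange_big; apply: eq_bigr => p _ /=.
    under eq_bigr => y _ do rewrite big_distrl /=.
    rewrite exchange_big big_distrl big_distrl /=; apply: eq_bigr => q _.
    transitivity (delta i p q * rhoQ p (tfst J 1 1 g ord0) (f ord0) *
        \sum_y rhoQ q (tsnd J 1 1 g ord0) y * epsQ y).
      rewrite big_distrr; apply: eq_bigr => y _ /=; ring.
    rewrite Heps; ring.
  transitivity (\sum_p (i == p)%:R * (rhoQ p (tfst J 1 1 g ord0) (f ord0)
      * epsQ (tsnd J 1 1 g ord0))).
    by apply: eq_bigr => p _; rewrite counitr' mulrA.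
  rewrite sum_delta.
  transitivity (\sum_x ((tfst J 1 1 g ord0) == x)%:R * (epsQ (tsnd J 1 1 g ord0) *
      tact 1 i [ffun _ => x] f)); last first.
    by apply: eq_bigr => x _; rewrite [in RHS]eq_sym eq_tb1 (eq_sym x) mulrA.
  by rewrite sum_delta tact1 ffunE mulrC.
- move=> f f'; rewrite /lcomp sum_tb2 /lid.
  transitivity (\sum_x (x == f' ord0)%:R * \sum_y DQ (f ord0) x y * epsQ y).
    apply: eq_bigr => x _; rewrite big_distrr; apply: eq_bigr => y _ /=.
    rewrite tfst_join tsnd_join !ffunE eq_tb1; ring.
  rewrite (sum_deltaL (f' ord0) (fun x => \sum_y DQ (f ord0) x y * epsQ y)) Hcou.
  by rewrite -eq_tb1' .
Qed.

End TP.

Section Kernel.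
Variables (R : {ffun I -> k} -> Prop) (B C : finType) (rB : I -> lmap k B B)
  (rC : I -> lmap k C C) (g : lmap k B C) (c0 : C) (b0 : B).
Hypotheses (Cu : forall c, c = c0) (mB : is_rmodule H rB) (mC : is_rmodule H rC)
  (Hg : H_linear rB rC g) (g0 : g b0 c0 != 0).

Local Notation gam := (g b0 c0).
Definition KA := {b : B | b != b0}.
Definition kf : lmap k KA B :=
  fun a b => (val a == b)%:R - g (val a) c0 / gam * (b == b0)%:R.
Definition kP : lmap k B KA := fun b a => (b == val a)%:R.
Definition krA (i : I) : lmap k KA KA := lcomp kf (lcomp (rB i) kP).

Lemma lapply_comp (X Y Z : finType) (v : {ffun X -> k}) (f : lmap k X Y) (h : lmap k Y Z) :
  lapply (lapply v f) h = lapply v (lcomp f h).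
Proof.
apply/ffunP => z; rewrite !ffunE /lcomp.
under eq_bigr => y _ do rewrite ffunE big_distrl /=.
rewrite exchange_big; apply: eq_bigr => x _; rewrite big_distrr; apply: eq_bigr => y _ /=.
by rewrite mulrA.
Qed.

Lemma lapply_lid (X : finType) (v : {ffun X -> k}) : lapply v (@lid k X) = v.
Proof. apply/ffunP => x; rewrite ffunE /lid; exact: sum_delta'. Qed.

Lemma kfP : lcomp kf kP = @lid k KA.
Proof.
apply: lmap_eqE => a a'; rewrite /lcomp /kP /kf.
rewrite (sum_delta' (val a') (fun b => (val a == b)%:R - g (val a) c0 / gam * (b == b0)%:R)).
have /negbTE -> := valP a'; by rewrite mulr0 subr0 /lid.
Qed.

Lemma kPf b b' : lcomp kP kf b b' = (b == b')%:R - g b c0 / gam * (b' == b0)%:R.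
Proof.
rewrite /lcomp /kP /kf.
have [eb|nb] := eqVneq b b0.
  rewrite big1; last first.
    move=> a _; suff /negbTE -> : b != val a by rewrite mul0r.
    by rewrite eb eq_sym (valP a).
  rewrite eb divff // mul1r eq_sym subrr //.
rewrite (bigD1 (exist _ b nb : KA)) //= eqxx mul1r big1 ?addr0 // => a ne.
suff /negbTE -> : b != val a by rewrite mul0r.
apply: contra ne => /eqP e; apply/eqP/val_inj => /=; by rewrite e.
Qed.

Lemma kfix (Z : finType) (X : lmap k Z B) :
  (forall z c, lcomp X g z c = 0) -> lcomp X (lcomp kP kf) = X.
Proof.
move=> X0; apply: lmap_eqE => z b'; change (\sum_b X z b * lcomp kP kf b b' = X z b').
under eq_bigr => b _ do rewrite kPf mulrBr.
rewrite sumrB (sum_delta' b' (X z)).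
transitivity (X z b' - (\sum_b X z b * g b c0) / gam * (b' == b0)%:R).
  congr (_ - _); rewrite !big_distrl; apply: eq_bigr => b _ /=; ring.
by move: (X0 z c0); rewrite /lcomp => ->; rewrite mul0r mul0r subr0.
Qed.

Lemma kfg a c : lcomp kf g a c = 0.
Proof.
rewrite (Cu c) /lcomp /kf.
under eq_bigr => b _ do rewrite mulrBl.
rewrite sumrB (sum_delta (val a) (fun b => g b c0)).
rewrite (eq_bigr (fun b => g (val a) c0 / gam * ((b == b0)%:R * g b c0))); last first.
  by move=> b _; rewrite mulrA.
by rewrite -big_distrr /= sum_deltaL mulfVK // subrr.
Qed.

Lemma lcomp0 (X Y Z : finType) (f : lmap k X Y) (h : lmap k Y Z) :
  (forall x y, f x y = 0) -> forall x z, lcomp f h x z = 0.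
Proof. by move=> f0 x z; rewrite /lcomp big1 // => y _; rewrite f0 mul0r. Qed.

Lemma kfrho i : lcomp (lcomp kf (rB i)) g = lcomp (lcomp kf g) (rC i).
Proof.
by rewrite (lmap_eqE (lcompA _ _ _)) (lmap_eqE (Hg i)) -(lmap_eqE (lcompA _ _ _)).
Qed.

Lemma krA_lin i : lcomp (krA i) kf = lcomp kf (rB i).
Proof.
rewrite /krA (lmap_eqE (lcompA _ _ _)) (lmap_eqE (lcompA _ _ _)).
rewrite -(lmap_eqE (lcompA kf (rB i) (lcomp kP kf))).
rewrite kfix // => z c; rewrite kfrho; exact: lcomp0 kfg z c.
Qed.

Lemma lcomp_lin (Y : I -> lmap k B B) (c : I -> k) a b :
  lcomp kf (lcomp (fun x y => \sum_l c l * Y l x y) kP) a b =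
  \sum_l c l * lcomp kf (lcomp (Y l) kP) a b.
Proof.
rewrite /lcomp.
transitivity (\sum_x \sum_y \sum_l c l * kf a x * Y l x y * kP y b).
  apply: eq_bigr => x _; rewrite big_distrr; apply: eq_bigr => y _ /=.
  rewrite big_distrl big_distrr; apply: eq_bigr => l _ /=; ring.
under eq_bigr => x _ do rewrite exchange_big.
rewrite exchange_big; apply: eq_bigr => l _ /=.
rewrite big_distrr; apply: eq_bigr => x _ /=; rewrite big_distrr big_distrr.
by apply: eq_bigr => y _ /=; ring.
Qed.

Lemma krA_mod : is_rmodule H krA.
Proof.
case: mB => mB1 mB2; split.
  move=> i j a b.
  have -> : lcomp (krA i) (krA j) = lcomp kf (lcomp (lcomp (rB i) (rB j)) kP).
    rewrite {2}/krA -(lmap_eqE (lcompA (krA i) kf _)) krA_lin.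
    by rewrite (lmap_eqE (lcompA kf (rB i) _)) -(lmap_eqE (lcompA (rB i) (rB j) kP)).
  by rewrite (lmap_eqE (mB1 i j)) lcomp_lin.
move=> a b; rewrite -lcomp_lin (lmap_eqE mB2) lcomp1l.
by rewrite kfP.
Qed.

Lemma lapply0 (X Y : finType) (h : lmap k X Y) : lapply 0 h = 0.
Proof. by apply/ffunP => y; rewrite !ffunE big1 // => x _; rewrite ffunE mul0r. Qed.

Hypothesis SS : semisimple_ext H R.

Lemma ss_kernel :
  (exists s, R_linear R rC rB s /\ lmap_eq (lcomp s g) (@lid k C)) ->
  exists s, H_linear rC rB s /\ lmap_eq (lcomp s g) (@lid k C).
Proof.
move=> Rs.
have fix_v (v : {ffun B -> k}) : lapply v g = 0 -> lapply v (lcomp kP kf) = v.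
  move=> v0; apply/ffunP => b'.
  have H0 : forall (z : 'I_1) c, lcomp (fun _ b => v b) g z c = 0.
    by move=> z c; move/ffunP: v0 => /(_ c); rewrite !ffunE.
  have := congr1 (fun F => F ord0 b') (kfix H0); rewrite ffunE => <- //.
apply: (SS (f := kf) krA_mod mB mC _ Hg _ _ _ Rs).
- by move=> i; rewrite krA_lin.
- by move=> v v0; rewrite -(lapply_lid v) -kfP -lapply_comp v0 lapply0.
- move=> w; exists [ffun b => (b == b0)%:R * (w c0 / gam)].
  apply/ffunP => c; rewrite ffunE (Cu c).
  rewrite (eq_bigr (fun b => (b == b0)%:R * (w c0 / gam * g b c0))); last first.
    by move=> b _; rewrite ffunE -mulrA.
  by rewrite sum_deltaL mulfVK.
move=> v; split.
  by move=> v0; exists (lapply v kP); rewrite lapply_comp fix_v.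
case=> u <-; rewrite lapply_comp; apply/ffunP => c; rewrite !ffunE.
by rewrite big1 // => b _; rewrite kfg mulr0.
Qed.

End Kernel.

Section Quot.
Variables (R : {ffun I -> k} -> Prop) (J : finType) (pi : lmap k I J)
  (rhoQ : I -> lmap k J J).
Hypotheses (HR : hopf_subalg H R) (HQ : is_quotient_RplusH H R pi rhoQ).
Variable sig : J -> {ffun I -> k}.
Hypothesis Hsig : forall j, lapply (sig j) pi = bvec k j.
Local Notation mu := (hmu H).
Local Notation eta := (heta H).

Definition lin (w : I -> k) (h : {ffun I -> k}) := \sum_i h i * w i.

Lemma linD w x y : lin w (x + y) = lin w x + lin w y.
Proof. rewrite /lin -big_split; apply: eq_bigr => i _; by rewrite ffunE mulrDl. Qed.
Lemma linB w x y : lin w (x - y) = lin w x - lin w y.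
Proof. rewrite /lin -sumrB; apply: eq_bigr => i _; by rewrite !ffunE mulrBl. Qed.
Lemma lin_sum w (T : Type) (s : seq T) (F : T -> {ffun I -> k}) :
  lin w (\sum_(t <- s) F t) = \sum_(t <- s) lin w (F t).
Proof.
rewrite /lin; under eq_bigr => i _ do rewrite sum_ffunE big_distrl /=.
by rewrite exchange_big.
Qed.

Lemma hmulvE x y l : hmulv H x y l = \sum_i \sum_j x i * y j * mu i j l.
Proof. by rewrite ffunE. Qed.

Lemma hmulv_bvecr x i l : hmulv H x (bvec k i) l = \sum_a x a * mu a i l.
Proof.
rewrite hmulvE; apply: eq_bigr => a _.
rewrite (eq_bigr (fun j => (i == j)%:R * (x a * mu a j l))); last first.
  by move=> j _; rewrite ffunE; ring.
by rewrite sum_delta.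
Qed.

Lemma hmulv_bvecl x i l : hmulv H (bvec k i) x l = \sum_a x a * mu i a l.
Proof.
rewrite hmulvE.
rewrite (eq_bigr (fun j => (i == j)%:R * (\sum_a x a * mu j a l))); last first.
  by move=> j _; rewrite ffunE big_distrr; apply: eq_bigr => a _ /=; ring.
by rewrite sum_delta.
Qed.

Lemma lapplyE (A B : finType) (v : {ffun A -> k}) (f : lmap k A B) b :
  lapply v f b = \sum_a v a * f a b.
Proof. by rewrite ffunE. Qed.

Lemma lapply_bvec (A B : finType) (a : A) (f : lmap k A B) b : lapply (bvec k a) f b = f a b.
Proof.
rewrite lapplyE (eq_bigr (fun x => (a == x)%:R * f x b)) ?sum_delta //.
by move=> x _; rewrite ffunE.
Qed.

Lemma hmulv_decomp h x l : hmulv H h x l = \sum_i x i * hmulv H h (bvec k i) l.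
Proof.
rewrite hmulvE exchange_big; apply: eq_bigr => j _ /=.
rewrite hmulv_bvecr big_distrr; apply: eq_bigr => a _ /=; ring.
Qed.

Lemma pi_mul h x b :
  lapply (hmulv H h x) pi b = \sum_z lapply h pi z * \sum_i x i * rhoQ i z b.
Proof.
case: HQ => _ _ H3.
transitivity (\sum_i x i * lapply (hmulv H h (bvec k i)) pi b).
  rewrite lapplyE.
  under eq_bigr => l _ do rewrite hmulv_decomp big_distrl /=.
  rewrite exchange_big; apply: eq_bigr => i _ /=.
  rewrite lapplyE big_distrr; apply: eq_bigr => l _ /=; ring.
under eq_bigr => i _ do rewrite H3 lapplyE big_distrr /=.
rewrite exchange_big; apply: eq_bigr => z _ /=.
rewrite big_distrr; apply: eq_bigr => i _ /=; ring.
Qed.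

Local Notation eps := (heps H).

Lemma hmulv_1l x : hmulv H (honev H) x = x.
Proof.
apply/ffunP => l; rewrite hmulvE exchange_big /=.
rewrite -[RHS](sum_deltaL l x); apply: eq_bigr => j _.
rewrite -(hopf_unitl HH j l) big_distrl /=; apply: eq_bigr => i _; rewrite ffunE; ring.
Qed.

Lemma hmulv_1r x : hmulv H x (honev H) = x.
Proof.
apply/ffunP => l; rewrite hmulvE.
rewrite -[RHS](sum_deltaL l x); apply: eq_bigr => i _.
rewrite -(hopf_unitr HH i l) big_distrl /=; apply: eq_bigr => j _; rewrite ffunE; ring.
Qed.

Lemma lin_eps_mul x y : lin eps (hmulv H x y) = lin eps x * lin eps y.
Proof.
rewrite /lin.
under eq_bigr => l _ do rewrite hmulvE big_distrl /=.
rewrite exchange_big big_distrl /=; apply: eq_bigr => i _.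
under eq_bigr => l _ do rewrite big_distrl /=.
rewrite exchange_big big_distrr /=; apply: eq_bigr => j _.
transitivity (x i * y j * \sum_l mu i j l * eps l).
  rewrite big_distrr; apply: eq_bigr => l _ /=; ring.
rewrite (hopf_counit_mul HH); ring.
Qed.

Lemma lin_eps_1 : lin eps (honev H) = 1.
Proof.
rewrite -(hopf_counit_unit HH); apply: eq_bigr => i _; by rewrite ffunE.
Qed.

Lemma hmulv_linl a (u v : {ffun I -> k}) x l :
  hmulv H [ffun i => a * u i + v i] x l = a * hmulv H u x l + hmulv H v x l.
Proof.
rewrite !hmulvE big_distrr -big_split; apply: eq_bigr => i _ /=.
rewrite big_distrr -big_split; apply: eq_bigr => j _ /=; rewrite ffunE; ring.
Qed.

Lemma Kfact r x b : R r ->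
  lapply (hmulv H r x) pi b = lin eps r * lapply x pi b.
Proof.
case: HR => [[R0 Rlin] R1 Rmul Rcomul Rant] Rr.
set r' := [ffun i => (- lin eps r) * honev H i + r i].
have Rr' : Rplus H R r'.
  split; first exact: Rlin R1 Rr.
  rewrite /hcounitv -/(lin eps r') /lin.
  under eq_bigr => i _ do rewrite ffunE mulrDl.
  rewrite big_split /= -/(lin eps r).
  rewrite (eq_bigr (fun i => - lin eps r * (honev H i * eps i))); last by move=> i _; ring.
  by rewrite -big_distrr /= -/(lin eps (honev H)) lin_eps_1 mulr1 addNr.
have inR : in_RplusH H R (hmulv H r' x).
  exists [:: (r', x)]; split; first by move=> p; rewrite inE => /eqP ->.
  by rewrite big_seq1.
case: HQ => _ H2 _.
move/H2: inR => /ffunP /(_ b); rewrite ffunE lapplyE.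
under eq_bigr => l _ do rewrite hmulv_linl ffunE mulrDl.
rewrite big_split /= -lapplyE.
rewrite (eq_bigr (fun l => - lin eps r * (x l * pi l b))); last first.
  by move=> l _; rewrite -hmulvE hmulv_1l; ring.
rewrite -big_distrr /= -lapplyE ffunE => e.
have e0 : (0 : {ffun J -> k}) b = 0 by rewrite ffunE.
move: e; rewrite e0 => /eqP; rewrite addrC addr_eq0 => /eqP ->; ring.
Qed.


Lemma factor (w : I -> k) :
  (forall r y, Rplus H R r -> lin w (hmulv H r y) = 0) ->
  forall h, lin w h = \sum_j lapply h pi j * lin w (sig j).
Proof.
move=> Hv h.
have van : forall x, in_RplusH H R x -> lin w x = 0.
  move=> x [s [Hs ->]]; rewrite lin_sum big_seq big1 // => p /Hs; exact: Hv.
set S := \sum_j [ffun i => lapply h pi j * sig j i].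
have : in_RplusH H R (h - S).
  case: HQ => _ H2 _; apply/H2; apply/ffunP => b.
  rewrite !ffunE.
  have hS : forall a, (h - S) a = h a - \sum_j lapply h pi j * sig j a.
    by move=> a; rewrite !ffunE sum_ffunE; under eq_bigr do rewrite ffunE.
  under eq_bigr => a _ do rewrite hS mulrBl.
  rewrite sumrB -lapplyE.
  under eq_bigr => a _ do rewrite big_distrl /=.
  rewrite exchange_big /=.
  under eq_bigr => j _ do (rewrite (eq_bigr (fun a => lapply h pi j * (sig j a * pi a b))); last by move=> a _; rewrite mulrA).
  under eq_bigr => j _ do rewrite -big_distrr /= -lapplyE Hsig ffunE.
  rewrite /bvec; under eq_bigr do rewrite ffunE.
  by rewrite sum_delta' lapplyE subrr.
move/van; rewrite linB => /eqP; rewrite subr_eq0 => /eqP ->.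
rewrite lin_sum; apply: eq_bigr => j _; rewrite /lin big_distrr; apply: eq_bigr => i _ /=.
by rewrite ffunE mulrA.
Qed.


Definition epsQ j := lin eps (sig j).

Lemma lin_bvec w i : lin w (bvec k i) = w i.
Proof.
rewrite /lin (eq_bigr (fun j => (i == j)%:R * w j)) ?sum_delta //.
by move=> j _; rewrite ffunE.
Qed.

Lemma eps_key h : lin eps h = \sum_j lapply h pi j * epsQ j.
Proof.
apply: factor => r y [_ r0]; rewrite lin_eps_mul.
by move: r0; rewrite /hcounitv -/(lin eps r) => ->; rewrite mul0r.
Qed.

Lemma sum_bvec (A : finType) (i : A) (F : A -> k) : \sum_l bvec k i l * F l = F i.
Proof. rewrite -[RHS](sum_delta i); apply: eq_bigr => l _; by rewrite ffunE. Qed.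

Lemma rho_row a x b : lapply (hmulv H (sig a) x) pi b = \sum_l x l * rhoQ l a b.
Proof.
rewrite pi_mul Hsig (eq_bigr (fun z => (a == z)%:R * \sum_l x l * rhoQ l z b)) ?sum_delta //.
by move=> z _; rewrite ffunE.
Qed.

Lemma epsQ_H i a : \sum_b rhoQ i a b * epsQ b = eps i * epsQ a.
Proof.
have := eps_key (hmulv H (sig a) (bvec k i)).
rewrite lin_eps_mul lin_bvec -/(epsQ a) mulrC => ->.
apply: eq_bigr => b _; rewrite rho_row; congr (_ * _).
rewrite (eq_bigr (fun l => (i == l)%:R * rhoQ l a b)) ?sum_delta //.
by move=> l _; rewrite ffunE.
Qed.

Lemma hmulv_assoc_b h i j :
  hmulv H (hmulv H h (bvec k i)) (bvec k j) = hmulv H h (hmulv H (bvec k i) (bvec k j)).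
Proof.
apply/ffunP => o; rewrite hmulv_bvecr hmulv_decomp.
under eq_bigr => p _ do rewrite hmulv_bvecr big_distrl /=.
rewrite exchange_big /=.
transitivity (\sum_a h a * \sum_p mu i j p * mu a p o).
  apply: eq_bigr => a _; rewrite -(hopf_assoc HH) big_distrr; apply: eq_bigr => p _ /=; ring.
rewrite (eq_bigr (fun a => \sum_p h a * (mu i j p * mu a p o))); last by move=> a _; rewrite big_distrr.
rewrite exchange_big; apply: eq_bigr => p _ /=.
rewrite hmulv_bvecl hmulv_bvecr big_distrr; apply: eq_bigr => a _ /=.
rewrite (eq_bigr (fun c => (j == c)%:R * mu i c p)) ?sum_delta; first ring.
by move=> c _; rewrite ffunE.
Qed.

Lemma rhoQ_mod : is_rmodule H rhoQ.
Proof.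
split.
  move=> i j a b; rewrite /lcomp.
  have := rho_row a (hmulv H (bvec k i) (bvec k j)) b.
  rewrite -hmulv_assoc_b pi_mul => e.
  transitivity (\sum_l hmulv H (bvec k i) (bvec k j) l * rhoQ l a b); last first.
    by apply: eq_bigr => l _; rewrite hmulv_bvecl sum_bvec.
  rewrite -e; apply: eq_bigr => z _; by rewrite rho_row !sum_bvec.
move=> a b.
have := rho_row a (honev H) b; rewrite hmulv_1r Hsig ffunE /lid => ->.
by apply: eq_bigr => l _; rewrite ffunE.
Qed.


Local Notation delta := (hdelta H).
Definition wD b c i := \sum_x \sum_y delta i x y * pi x b * pi y c.
Definition Dc (u : {ffun I -> k}) a1 b1 := \sum_a u a * delta a a1 b1.
Definition Mc a1 a2 b := \sum_x mu a1 a2 x * pi x b.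

Lemma ex4 (X : finType) (F : X -> I -> I -> I -> I -> k) :
  \sum_x \sum_a1 \sum_b1 \sum_a2 \sum_b2 F x a1 b1 a2 b2 =
  \sum_a1 \sum_b1 \sum_a2 \sum_b2 \sum_x F x a1 b1 a2 b2.
Proof.
rewrite exchange_big; apply: eq_bigr => a1 _; rewrite exchange_big; apply: eq_bigr => b1 _.
rewrite exchange_big; apply: eq_bigr => a2 _; by rewrite exchange_big.
Qed.

Lemma lin_mul w u y : lin w (hmulv H u y) = \sum_a \sum_j u a * y j * (\sum_l mu a j l * w l).
Proof.
rewrite /lin.
under eq_bigr => l _ do rewrite hmulvE big_distrl /=.
rewrite exchange_big; apply: eq_bigr => a _ /=.
under eq_bigr => l _ do rewrite big_distrl /=.
rewrite exchange_big; apply: eq_bigr => j _ /=.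
rewrite big_distrr; apply: eq_bigr => l _ /=; ring.
Qed.

Lemma mu_wD a j b c : \sum_l mu a j l * wD b c l =
  \sum_a1 \sum_b1 \sum_a2 \sum_b2 delta a a1 b1 * delta j a2 b2 * (Mc a1 a2 b * Mc b1 b2 c).
Proof.
transitivity (\sum_x \sum_y (\sum_l mu a j l * delta l x y) * (pi x b * pi y c)).
  rewrite /wD.
  transitivity (\sum_l \sum_x \sum_y mu a j l * delta l x y * (pi x b * pi y c)).
    apply: eq_bigr => l _; rewrite big_distrr; apply: eq_bigr => x _ /=.
    rewrite big_distrr; apply: eq_bigr => y _ /=; ring.
  rewrite exchange_big; apply: eq_bigr => x _ /=; rewrite exchange_big; apply: eq_bigr => y _ /=.
  by rewrite big_distrl.
transitivity (\sum_x \sum_a1 \sum_b1 \sum_a2 \sum_b2 \sum_y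
   delta a a1 b1 * delta j a2 b2 * (mu a1 a2 x * pi x b * (mu b1 b2 y * pi y c))).
  apply: eq_bigr => x _.
  transitivity (\sum_y \sum_a1 \sum_b1 \sum_a2 \sum_b2
   delta a a1 b1 * delta j a2 b2 * (mu a1 a2 x * pi x b * (mu b1 b2 y * pi y c))); last first.
    exact: (ex4 (fun y a1 b1 a2 b2 =>
      delta a a1 b1 * delta j a2 b2 * (mu a1 a2 x * pi x b * (mu b1 b2 y * pi y c)))).
  apply: eq_bigr => y _; rewrite (hopf_comul_mul HH) big_distrl; apply: eq_bigr => a1 _ /=.
  rewrite big_distrl; apply: eq_bigr => b1 _ /=.
  rewrite big_distrl; apply: eq_bigr => a2 _ /=.
  rewrite big_distrl; apply: eq_bigr => b2 _ /=; ring.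
rewrite (ex4 (fun x a1 b1 a2 b2 => \sum_y
   delta a a1 b1 * delta j a2 b2 * (mu a1 a2 x * pi x b * (mu b1 b2 y * pi y c)))).
apply: eq_bigr => a1 _; apply: eq_bigr => b1 _; apply: eq_bigr => a2 _; apply: eq_bigr => b2 _.
rewrite /Mc big_distrlr big_distrr; apply: eq_bigr => x _ /=.
rewrite big_distrr; apply: eq_bigr => y _ /=; ring.
Qed.

Lemma Gform u y b c : lin (wD b c) (hmulv H u y) =
  \sum_a1 \sum_b1 \sum_a2 \sum_b2 Dc u a1 b1 * Dc y a2 b2 * (Mc a1 a2 b * Mc b1 b2 c).
Proof.
rewrite lin_mul.
under eq_bigr => a _ do under eq_bigr => j _ do rewrite mu_wD.
transitivity (\sum_a \sum_a1 \sum_b1 \sum_a2 \sum_b2 \sum_j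
   u a * y j * (delta a a1 b1 * delta j a2 b2 * (Mc a1 a2 b * Mc b1 b2 c))).
  apply: eq_bigr => a _.
  rewrite -(ex4 (fun j a1 b1 a2 b2 =>
   u a * y j * (delta a a1 b1 * delta j a2 b2 * (Mc a1 a2 b * Mc b1 b2 c)))).
  apply: eq_bigr => j _; rewrite big_distrr; apply: eq_bigr => a1 _ /=.
  rewrite big_distrr; apply: eq_bigr => b1 _ /=.
  rewrite big_distrr; apply: eq_bigr => a2 _ /=.
  by rewrite big_distrr.
rewrite (ex4 (fun a a1 b1 a2 b2 => \sum_j
   u a * y j * (delta a a1 b1 * delta j a2 b2 * (Mc a1 a2 b * Mc b1 b2 c)))).
apply: eq_bigr => a1 _; apply: eq_bigr => b1 _; apply: eq_bigr => a2 _; apply: eq_bigr => b2 _.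
set MM := (Mc a1 a2 b * Mc b1 b2 c); unfold Dc.
rewrite -mulrA big_distrl /=; apply: eq_bigr => a _.
rewrite big_distrl big_distrr /=; apply: eq_bigr => j _ /=; ring.
Qed.


Lemma Mc_rho a1 a2 b : Mc a1 a2 b = \sum_z pi a1 z * rhoQ a2 z b.
Proof.
case: HQ => _ _ H3.
have := congr1 (fun F : {ffun J -> k} => F b) (H3 (bvec k a1) a2); rewrite /= !lapplyE => e.
transitivity (\sum_a hmulv H (bvec k a1) (bvec k a2) a * pi a b).
  by apply: eq_bigr => x _; rewrite hmulv_bvecl sum_bvec.
rewrite e; apply: eq_bigr => z _; by rewrite lapply_bvec.
Qed.

Lemma Mc_K p a2 b : R p -> \sum_a1 p a1 * Mc a1 a2 b = lin eps p * pi a2 b.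
Proof.
move=> Rp; rewrite -(lapply_bvec a2 pi b) -Kfact // lapplyE.
under eq_bigr => a1 _ do rewrite /Mc big_distrr /=.
rewrite exchange_big; apply: eq_bigr => x _ /=.
rewrite hmulv_bvecr big_distrl; apply: eq_bigr => a1 _ /=; ring.
Qed.

Lemma ex22 (F : I -> I -> I -> I -> k) :
  \sum_a1 \sum_b1 \sum_a2 \sum_b2 F a1 b1 a2 b2 =
  \sum_a2 \sum_b2 \sum_a1 \sum_b1 F a1 b1 a2 b2.
Proof.
transitivity (\sum_a1 \sum_a2 \sum_b2 \sum_b1 F a1 b1 a2 b2).
  apply: eq_bigr => a1 _; rewrite exchange_big; apply: eq_bigr => a2 _; by rewrite exchange_big.
rewrite exchange_big; apply: eq_bigr => a2 _; by rewrite exchange_big.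
Qed.

Lemma wD_van r y b c : Rplus H R r -> lin (wD b c) (hmulv H r y) = 0.
Proof.
case=> Rr r0.
case: HR => [[R0 Rlin] R1 Rmul Rcomul Rant].
have [s [Hs Hc]] := Rcomul r Rr.
have Dcr a1 b1 : Dc r a1 b1 = \sum_(p <- s) p.1 a1 * p.2 b1.
  have := congr1 (fun F : {ffun I * I -> k} => F (a1, b1)) Hc; rewrite /= ffunE sum_ffunE => e.
  rewrite /Dc e; apply: eq_bigr => p _; by rewrite ffunE.
have Seps : \sum_(p <- s) lin eps p.1 * lin eps p.2 = 0.
  rewrite -[X in _ = X]r0.
  transitivity (\sum_a1 \sum_b1 Dc r a1 b1 * eps a1 * eps b1).
    under [RHS]eq_bigr => a1 _ do under eq_bigr => b1 _ do rewrite Dcr big_distrl big_distrl /=.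
    symmetry; under eq_bigr => a1 _ do rewrite exchange_big /=.
    rewrite exchange_big /=; apply: eq_bigr => p _.
    rewrite /lin big_distrl /=; apply: eq_bigr => a1 _; rewrite big_distrr /=.
    apply: eq_bigr => b1 _ /=; ring.
  rewrite /Dc.
  under eq_bigr => a1 _ do under eq_bigr => b1 _ do rewrite big_distrl big_distrl /=.
  under eq_bigr => a1 _ do rewrite exchange_big /=.
  rewrite exchange_big /=; apply: eq_bigr => a _.
  transitivity (\sum_b1 r a * ((\sum_a1 eps a1 * delta a a1 b1) * eps b1)).
    rewrite exchange_big; apply: eq_bigr => b1 _ /=.
    rewrite big_distrl big_distrr /=; apply: eq_bigr => a1 _ /=; ring.
  under eq_bigr => b1 _ do rewrite (hopf_counitl HH).
  rewrite (eq_bigr (fun b1 => r a * ((a == b1)%:R * eps b1))); last by [].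
  by rewrite -big_distrr /= sum_delta.
rewrite Gform ex22 big1 // => a2 _; rewrite big1 // => b2 _.
transitivity (Dc y a2 b2 * \sum_a1 \sum_b1 Dc r a1 b1 * (Mc a1 a2 b * Mc b1 b2 c)).
  rewrite big_distrr; apply: eq_bigr => a1 _ /=; rewrite big_distrr; apply: eq_bigr => b1 _ /=; ring.
suff -> : \sum_a1 \sum_b1 Dc r a1 b1 * (Mc a1 a2 b * Mc b1 b2 c) = 0 by rewrite mulr0.
under eq_bigr => a1 _ do under eq_bigr => b1 _ do rewrite Dcr big_distrl /=.
under eq_bigr => a1 _ do rewrite exchange_big /=.
rewrite exchange_big /=.
transitivity ((\sum_(p <- s) lin eps p.1 * lin eps p.2) * (pi a2 b * pi b2 c)); last first.
  by rewrite Seps mul0r.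
rewrite big_distrl /= big_seq [RHS]big_seq; apply: eq_bigr => p Hp.
have [R1p R2p] := Hs p Hp.
transitivity ((lin eps p.1 * pi a2 b) * (lin eps p.2 * pi b2 c)); last by ring.
rewrite -(Mc_K a2 b R1p) -(Mc_K b2 c R2p) big_distrlr /=.
apply: eq_bigr => a1 _; apply: eq_bigr => b1 _; ring.
Qed.


Lemma lin_wD z w h : lin (wD z w) h = \sum_x \sum_y Dc h x y * (pi x z * pi y w).
Proof.
rewrite /lin /wD.
transitivity (\sum_l \sum_x \sum_y h l * delta l x y * (pi x z * pi y w)).
  apply: eq_bigr => l _; rewrite big_distrr; apply: eq_bigr => x _ /=.
  rewrite big_distrr; apply: eq_bigr => y _ /=; ring.
rewrite exchange_big; apply: eq_bigr => x _; rewrite exchange_big; apply: eq_bigr => y _.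
by rewrite /Dc big_distrl.
Qed.

Lemma P2_mul h i b c : lin (wD b c) (hmulv H h (bvec k i)) =
  \sum_z \sum_w lin (wD z w) h *
     (\sum_p \sum_q delta i p q * rhoQ p z b * rhoQ q w c).
Proof.
rewrite Gform.
transitivity (\sum_a1 \sum_b1 \sum_a2 \sum_b2 \sum_z \sum_w
  Dc h a1 b1 * (pi a1 z * pi b1 w) * (delta i a2 b2 * rhoQ a2 z b * rhoQ b2 w c)).
  apply: eq_bigr => a1 _; apply: eq_bigr => b1 _; apply: eq_bigr => a2 _; apply: eq_bigr => b2 _.
  rewrite !Mc_rho /Dc sum_bvec big_distrlr big_distrr /=; apply: eq_bigr => z _.
  rewrite big_distrr /=; apply: eq_bigr => w _; ring.
transitivity (\sum_z \sum_w \sum_a1 \sum_b1 \sum_a2 \sum_b2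
  Dc h a1 b1 * (pi a1 z * pi b1 w) * (delta i a2 b2 * rhoQ a2 z b * rhoQ b2 w c)).
  rewrite -(ex4 (fun z a1 b1 a2 b2 => \sum_w
     Dc h a1 b1 * (pi a1 z * pi b1 w) * (delta i a2 b2 * rhoQ a2 z b * rhoQ b2 w c))).
  apply: eq_bigr => z _.
  by rewrite -(ex4 (fun w a1 b1 a2 b2 =>
     Dc h a1 b1 * (pi a1 z * pi b1 w) * (delta i a2 b2 * rhoQ a2 z b * rhoQ b2 w c))).
apply: eq_bigr => z _; apply: eq_bigr => w _.
rewrite lin_wD big_distrl /=; apply: eq_bigr => a1 _; rewrite big_distrl /=; apply: eq_bigr => b1 _.
rewrite big_distrr /=; apply: eq_bigr => a2 _; rewrite big_distrr /=; apply: eq_bigr => b2 _ /=.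
ring.
Qed.

Definition DQ a b c := lin (wD b c) (sig a).

Lemma D_key h b c : lin (wD b c) h = \sum_j lapply h pi j * DQ j b c.
Proof. apply: factor => r y Hr; exact: wD_van. Qed.

Lemma DQ_H i a b c : \sum_x rhoQ i a x * DQ x b c =
  \sum_x \sum_y DQ a x y * \sum_p \sum_q delta i p q * rhoQ p x b * rhoQ q y c.
Proof.
transitivity (lin (wD b c) (hmulv H (sig a) (bvec k i))).
  rewrite D_key; apply: eq_bigr => x _; by rewrite rho_row sum_bvec.
by rewrite P2_mul.
Qed.

Lemma DQ_cou a b : \sum_c DQ a b c * epsQ c = (a == b)%:R.
Proof.
have epsy y : \sum_c pi y c * epsQ c = eps y.
  by rewrite -(lin_bvec eps y) eps_key; apply: eq_bigr => c _; rewrite lapply_bvec.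
transitivity (\sum_x \sum_y Dc (sig a) x y * (pi x b * eps y)).
  under eq_bigr => c _ do rewrite /DQ lin_wD big_distrl /=.
  rewrite exchange_big; apply: eq_bigr => x _ /=.
  under eq_bigr => c _ do rewrite big_distrl /=.
  rewrite exchange_big; apply: eq_bigr => y _ /=.
  rewrite -epsy !big_distrr /=; apply: eq_bigr => c _; ring.
transitivity (\sum_x sig a x * pi x b); last by rewrite -lapplyE Hsig ffunE.
apply: eq_bigr => x _; rewrite /Dc.
transitivity (\sum_l sig a l * (\sum_y delta l x y * eps y) * pi x b).
  under eq_bigr => y _ do rewrite big_distrl /=.
  rewrite exchange_big; apply: eq_bigr => l _ /=.
  rewrite !big_distrr big_distrl /=; apply: eq_bigr => y _; ring.
under eq_bigr => l _ do rewrite counitr'.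
rewrite -big_distrl /=; congr (_ * _).
by rewrite (eq_bigr (fun l => sig a l * (l == x)%:R)) // sum_delta'.
Qed.

Definition s0 : lmap k (tbasis J 0) (tbasis J 1) := fun _ g => lapply (honev H) pi (g ord0).

Lemma s0_Rlin : R_linear R (tact H rhoQ 0) (tact H rhoQ 1) s0.
Proof.
move=> x Rx f g; rewrite /lcomp /ract /s0.
rewrite (sum_ffun0 _ f).
under eq_bigr => i _ do rewrite tact0.
rewrite -/(lin eps x) sum_tb1.
under eq_bigr => j _ do (rewrite ffunE; under eq_bigr => i _ do rewrite tact1 ffunE).
rewrite -pi_mul hmulv_1l; have := Kfact (honev H) (g ord0) Rx; by rewrite hmulv_1r => ->.
Qed.

Lemma s0_id : lmap_eq (lcomp s0 (fun f _ => epsQ (f ord0))) (@lid k _).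
Proof.
move=> f g; rewrite /lcomp /s0 sum_tb1 /lid (ffun0_eq f g) eqxx.
under eq_bigr => j _ do rewrite ffunE.
by rewrite -eps_key lin_eps_1.
Qed.

Lemma epsQ_nz : exists j0, epsQ j0 != 0.
Proof.
case: (boolP [exists j, epsQ j != 0]) => [/existsP [j Hj]|]; first by exists j.
rewrite negb_exists => /forallP H0.
have := lin_eps_1; rewrite eps_key big1 => [/eqP|j _]; first by rewrite eq_sym oner_eq0.
by move: (H0 j); rewrite negbK => /eqP ->; rewrite mulr0.
Qed.

End Quot.

Section TP2.
Variables (J : finType) (rhoQ : I -> lmap k J J).
Local Notation tact := (tact H rhoQ).

Lemma tact1_mod : is_rmodule H rhoQ -> is_rmodule H (tact 1).
Proof.
case=> m1 m2; split.
  move=> i j f g; rewrite /lcomp sum_tb1.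
  under eq_bigr => x _ do rewrite !tact1 ffunE.
  under [RHS]eq_bigr => l _ do rewrite tact1.
  exact: m1.
move=> f g; under eq_bigr => l _ do rewrite tact1.
by rewrite m2 /lid eq_tb1'.
Qed.

Lemma tact0_mod : is_rmodule H (tact 0).
Proof.
split.
  move=> i j f g; rewrite /lcomp (sum_ffun0 _ f) !tact0.
  under [RHS]eq_bigr => l _ do rewrite tact0.
  by rewrite (hopf_counit_mul HH).
move=> f g; under eq_bigr => l _ do rewrite tact0.
by rewrite (hopf_counit_unit HH) /lid (ffun0_eq f g) eqxx.
Qed.

Definition psi0 (epsQ : J -> k) : lmap k (tbasis J 1) (tbasis J 0) :=
  fun f _ => epsQ (f ord0).

Lemma psi0_Hlin epsQ : (forall i a, \sum_b rhoQ i a b * epsQ b = eps i * epsQ a) ->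
  H_linear (tact 1) (tact 0) (psi0 epsQ).
Proof.
move=> He i f c; rewrite /lcomp /psi0 sum_tb1 (sum_ffun0 _ c).
under eq_bigr => x _ do rewrite tact1 ffunE.
by rewrite He tact0 mulrC.
Qed.

Lemma hsummand01 R (SS : semisimple_ext H R) (epsQ : J -> k) :
  is_rmodule H rhoQ -> (forall i a, \sum_b rhoQ i a b * epsQ b = eps i * epsQ a) ->
  forall j0, epsQ j0 != 0 ->
  forall s0 : lmap k (tbasis J 0) (tbasis J 1),
  R_linear R (tact 0) (tact 1) s0 -> lmap_eq (lcomp s0 (psi0 epsQ)) (@lid k _) ->
  hsummand rhoQ 0 1.
Proof.
move=> mQ He j0 Hj0 s0 Rs0 Hs0.
have [phi [Hphi Hid]] : exists s, H_linear (tact 0) (tact 1) s /\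
    lmap_eq (lcomp s (psi0 epsQ)) (@lid k _).
  apply: (@ss_kernel R _ _ (tact 1) (tact 0) (psi0 epsQ) [ffun _ => j0] [ffun _ => j0]).
  - move=> c; exact: ffun0_eq.
  - exact: tact1_mod.
  - exact: tact0_mod.
  - exact: psi0_Hlin.
  - by rewrite /psi0 ffunE.
  - exact: SS.
  by exists s0.
by exists phi, (psi0 epsQ); split => //; exact: psi0_Hlin.
Qed.

End TP2.
End Itcomul.

Unset Implicit Arguments.
Theorem mainTheorem14 (k : fieldType) (I : finType) (H : hopf_struct k I)
  (R : {ffun I -> k} -> Prop) (J : finType) (pi : lmap k I J)
  (rhoQ : I -> lmap k J J) :
  is_hopf H -> hopf_subalg H R -> is_quotient_RplusH H R pi rhoQ ->
  (forall n : nat, bimod_summand H rhoQ n 1 2) /\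
  (forall n m : nat, (1 <= n)%N -> (n.+1 <= m)%N -> bimod_summand H rhoQ n 1 m) /\
  (semisimple_ext H R ->
     forall n m : nat, (n <= m)%N -> bimod_summand H rhoQ n 0 m).
Proof.
move=> HH HR HQ.
have [sig Hsig] : exists sig : J -> {ffun I -> k}, forall j, lapply (sig j) pi = bvec k j.
  apply: (@fin_all_exists J (fun _ => {ffun I -> k}) (fun j s => lapply s pi = bvec k j)) => j.
  by case: HQ => H1 _ _; exact: H1.
have h12 : hsummand H rhoQ 1 2.
  exact: (hsummand12 HH (DQ_H HH HR HQ Hsig) (epsQ_H HH HQ Hsig) (DQ_cou HH HQ Hsig)).
have hstep1 : forall m, (1 <= m)%N -> hsummand H rhoQ m m.+1.
  move=> m m1; have := bimod_hsummand (lift_summand HH m.-1 h12).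
  by rewrite addn1 addn2 prednK.
have h1m : forall m, (1 <= m)%N -> hsummand H rhoQ 1 m.
  elim=> [//|m IH] _.
  case: m IH => [|m] IH; first exact: hsummand_refl.
  exact: (hsummand_trans (IH isT) (hstep1 m.+1 isT)).
split; first by move=> n; exact: (lift_summand HH n h12).
split; first by move=> n m n1 nm; exact: (lift_summand HH n (h1m m (leq_trans n1 (ltnW nm)))).
move=> SS n m _.
have [j0 Hj0] := epsQ_nz HH HQ Hsig.
have h01 : hsummand H rhoQ 0 1.
  exact: (hsummand01 HH SS (rhoQ_mod HH HQ Hsig) (epsQ_H HH HQ Hsig) Hj0
            (s0_Rlin HH HR HQ) (s0_id HH HQ Hsig)).
have h0m : forall p, hsummand H rhoQ 0 p.
  elim=> [|p IH]; first exact: hsummand_refl.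
  apply: hsummand_trans IH _.
  have := bimod_hsummand (lift_summand HH p h01).
  by rewrite addn0 addn1.
exact: (lift_summand HH n (h0m m)).
Qed.
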